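(* Consider a Galton–Watson branching process with offspring distribution $D=\{c_i\}_{i=0}^d$ and branching factor $b>1$, each node holding an answer independently with probability $1/n$, and let $\lambda_i=\phi_{i-1}-\phi_i$ as defined in the context. Then there exist levels $1\le \ell^1\le \ell^*$ such that: (1) $\{\lambda_i\}$ is single-peaked, peaking at $\ell^*$: for all $i\le \ell^*$, $\lambda_{i-1}\le\lambda_i$, and for all $j\ge\ell^*$, $\lambda_j>\lambda_{j+1}$; (2) there exists a constant $\rho>1$ such that $\lambda_{i+1}\ge\rho\,\lambda_i$ for all $i<\ell^1$; (3) $\lambda_{\ell^1}=\Omega(1)$, and consequently $\ell^*-\ell^1=O(1)$; (4) there exists a constant $\gamma>1$ such that $\sum_{j\ge i}\lambda_j\le\gamma\,\lambda_i$ for all $i\ge\ell^*+2$.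
   Context: Branching process: starting from the root (level $0$) of an infinite $d$-ary tree, each node independently samples a number of children $C(v)\sim D$ (where $c_i$ is the probability of $i$ children) and connects to $C(v)$ of its $d$ children chosen uniformly at random; $b=\sum_i ic_i$. Each non-root node independently holds an answer with probability $p=1/n$. Let $t(x)=\sum_{j=0}^d c_j x^j(1-\frac1n)^j$, $\phi_0=1$ and $\phi_i=t(\phi_{i-1})$ for $i\ge1$; $\phi_i$ is the probability that no active node in levels $1,\dots,i$ holds an answer, and $\lambda_i=\phi_{i-1}-\phi_i$ ($i\ge1$) is the probability that the first (lowest-level) answer lies at level $i$. The offspring distribution (hence $b$ and $d$) is fixed while $n$ is allowed to grow; ''constant'', $\Omega(1)$ and $O(1)$ mean bounds independent of $n$. *)

(* Defs.v *)
From Stdlib Require Import Reals.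
From Coquelicot Require Import Coquelicot.
Open Scope R_scope.

Definition is_offspring_dist (d : nat) (c : nat -> R) : Prop :=
  (forall i, (i <= d)%nat -> 0 <= c i) /\ sum_f_R0 c d = 1.

Definition branching (d : nat) (c : nat -> R) : R :=
  sum_f_R0 (fun i => INR i * c i) d.

Definition tfun (d : nat) (c : nat -> R) (n : nat) (x : R) : R :=
  sum_f_R0 (fun j => c j * x ^ j * (1 - / INR n) ^ j) d.

Fixpoint phi (d : nat) (c : nat -> R) (n : nat) (i : nat) : R :=
  match i with
  | O => 1
  | S k => tfun d c n (phi d c n k)
  end.

(* lambda_i = phi_{i-1} - phi_i, meaningful for i >= 1
   (for i = 0 this evaluates to 0 by truncated subtraction; never used). *)
Definition lam (d : nat) (c : nat -> R) (n : nat) (i : nat) : R :=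
  phi d c n (i - 1) - phi d c n i.

(* Main.v *)
Require Import Defs.
From Stdlib Require Import Reals Lra Lia Wf_nat Classical.
From Coquelicot Require Import Coquelicot.
Open Scope R_scope.

Fixpoint Dp (j : nat) (x y : R) : R :=
  match j with O => 0 | S k => x ^ k + y * Dp k x y end.

Lemma Dp_id j x y : (x - y) * Dp j x y = x ^ j - y ^ j.
Proof. induction j; simpl. ring.
 replace ((x - y) * (x ^ j + y * Dp j x y)) with ((x-y)*x^j + y*((x-y)*Dp j x y)) by ring.
 rewrite IHj. ring. Qed.

Lemma Dp_nonneg j x y : 0 <= x -> 0 <= y -> 0 <= Dp j x y.
Proof. intros. induction j; simpl. lra. pose proof (pow_le x j H). nra. Qed.

Lemma Dp_mono j x y x' y' : 0 <= x' <= x -> 0 <= y' <= y -> Dp j x' y' <= Dp j x y.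
Proof. intros. induction j; simpl. lra.
 pose proof (pow_incr x' x j H). pose proof (Dp_nonneg j x' y' ltac:(lra) ltac:(lra)). nra. Qed.

Lemma Dp_diag j Y : Dp (S j) Y Y = INR (S j) * Y ^ j.
Proof. induction j. simpl. ring. change (Dp (S (S j)) Y Y) with (Y ^ (S j) + Y * Dp (S j) Y Y).
 rewrite IHj. rewrite !S_INR. simpl. ring. Qed.

Lemma Dp_ge_pow j x y : 0 <= x -> 0 <= y -> Dp (S j) x y >= x ^ j.
Proof. intros. simpl. pose proof (Dp_nonneg j x y H H0). nra. Qed.

Lemma Dp_gap j x y z : 0 <= z <= y -> y <= x ->
  Dp (S (S j)) x y - Dp (S (S j)) y z >= y ^ j * (x - z).
Proof. intros. induction j.
 - simpl. lra.
 - change (Dp (S (S (S j))) x y) with (x ^ (S (S j)) + y * Dp (S (S j)) x y).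
   change (Dp (S (S (S j))) y z) with (y ^ (S (S j)) + z * Dp (S (S j)) y z).
   pose proof (pow_incr y x (S (S j)) ltac:(lra)).
   pose proof (Dp_nonneg (S (S j)) y z ltac:(lra) ltac:(lra)).
   replace (y ^ S j) with (y * y ^ j) by (simpl; ring).
   pose proof (pow_le y j ltac:(lra)). nra. Qed.

Lemma sum_nonneg (A : nat -> R) N : (forall i, (i <= N)%nat -> 0 <= A i) -> 0 <= sum_f_R0 A N.
Proof. intros H. induction N. simpl; apply H; lia.
 simpl. pose proof (H (S N) ltac:(lia)). assert (0 <= sum_f_R0 A N) by (apply IHN; intros; apply H; lia). lra. Qed.

Lemma sum_ge_term (A : nat -> R) N k : (forall i, (i <= N)%nat -> 0 <= A i) -> (k <= N)%nat -> A k <= sum_f_R0 A N.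
Proof. intros H Hk. induction N.
 - assert (k = 0%nat) by lia. subst. simpl. lra.
 - simpl. destruct (Nat.eq_dec k (S N)).
   + subst. assert (0 <= sum_f_R0 A N) by (apply sum_nonneg; intros; apply H; lia). lra.
   + pose proof (H (S N) ltac:(lia)). assert (A k <= sum_f_R0 A N) by (apply IHN; [intros; apply H; lia| lia]). lra.
Qed.

Lemma bern e k : 0 <= e <= 1 -> (1 - e) ^ k >= 1 - INR k * e.
Proof. intros. induction k. simpl. lra. rewrite S_INR. simpl.
 pose proof (pos_INR k). pose proof (pow_le (1-e) k ltac:(lra)). nra. Qed.

Lemma least_ex (Q : nat -> Prop) : (exists n, Q n) -> exists n, Q n /\ forall m, (m < n)%nat -> ~ Q m.
Proof. intros [n Hn]. revert Hn. induction n as [n IH] using lt_wf_ind. intro Hn.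
 destruct (classic (exists m, (m < n)%nat /\ Q m)) as [[m [Hm Qm]]|H].
 - exact (IH m Hm Qm).
 - exists n. split; auto. intros m Hm Qm. apply H. eauto. Qed.
Lemma pow_decr Y k m : 0 <= Y <= 1 -> (k <= m)%nat -> Y ^ m <= Y ^ k.
Proof. intros H Hkm. induction Hkm. lra. simpl. pose proof (pow_le Y m ltac:(lra)). nra. Qed.

Section S.
Variable d : nat.
Variable c : nat -> R.
Hypothesis hc : forall i, (i <= d)%nat -> 0 <= c i.
Hypothesis hs : sum_f_R0 c d = 1.

Definition Tq q x := sum_f_R0 (fun j => c j * x ^ j * q ^ j) d.
Definition Fq x y := sum_f_R0 (fun j => c j * Dp j x y) d.

Lemma T_diff q x y : Tq q x - Tq q y = q * (x - y) * Fq (q * x) (q * y).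
Proof. unfold Tq, Fq. rewrite <- minus_sum, scal_sum. apply sum_eq. intros i _.
 pose proof (Dp_id i (q*x) (q*y)). rewrite !Rpow_mult_distr in H.
 replace (c i * Dp i (q * x) (q * y) * (q * (x - y))) with (c i * ((q * x - q * y) * Dp i (q * x) (q * y))) by ring.
 rewrite H. ring. Qed.

Lemma Fq_nonneg x y : 0 <= x -> 0 <= y -> 0 <= Fq x y.
Proof. intros. apply sum_nonneg. intros. pose proof (hc i H1). pose proof (Dp_nonneg i x y H H0). nra. Qed.

Lemma Fq_mono x y x' y' : 0 <= x' <= x -> 0 <= y' <= y -> Fq x' y' <= Fq x y.
Proof. intros. apply sum_Rle. intros. pose proof (hc n H1). pose proof (Dp_mono n x y x' y' H H0). nra. Qed.

Lemma Fq_term J x y : (J <= d)%nat -> 0 <= x -> 0 <= y -> c J * Dp J x y <= Fq x y.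
Proof. intros. apply (sum_ge_term (fun j => c j * Dp j x y)); auto.
 intros. pose proof (hc i H2). pose proof (Dp_nonneg i x y H0 H1). nra. Qed.

Lemma Fq_diag Y : 0 <= Y <= 1 -> Fq Y Y >= Y ^ d * branching d c.
Proof. intros. unfold branching, Fq. rewrite scal_sum. apply Rle_ge, sum_Rle. intros j Hj.
 pose proof (hc j Hj). destruct j. simpl. lra. rewrite Dp_diag.
 pose proof (pow_decr Y j d H ltac:(lia)). pose proof (pos_INR (S j)).
 assert (0 <= c (S j) * INR (S j)) by nra. nra. Qed.

Lemma Fq_gap j' x y z : (S (S j') <= d)%nat -> 0 <= z <= y -> y <= x ->
  Fq x y - Fq y z >= c (S (S j')) * y ^ j' * (x - z).
Proof. intros. unfold Fq. rewrite <- minus_sum.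
 pose proof (Dp_gap j' x y z H0 H1). pose proof (hc _ H).
 apply Rle_ge. eapply Rle_trans; [| apply (sum_ge_term (fun i => c i * Dp i x y - c i * Dp i y z) d (S (S j'))); auto].
 - cbv beta. assert (0 <= c (S (S j')) * (Dp (S (S j')) x y - Dp (S (S j')) y z - y ^ j' * (x - z))) by (apply Rmult_le_pos; lra). nra.
 - intros. pose proof (hc i H4). pose proof (Dp_mono i x y y z ltac:(lra) ltac:(lra)). nra. Qed.

Lemma Tq_mono q x y : 0 <= q -> 0 <= y <= x -> Tq q y <= Tq q x.
Proof. intros. pose proof (T_diff q x y). pose proof (Fq_nonneg (q*x) (q*y) ltac:(nra) ltac:(nra)).
 assert (0 <= q * (x - y)) by nra. nra. Qed.

Lemma Tq_term J q x : (J <= d)%nat -> 0 <= q -> 0 <= x -> c J * (q * x) ^ J <= Tq q x.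
Proof. intros. unfold Tq. rewrite Rpow_mult_distr.
 replace (c J * (q ^ J * x ^ J)) with (c J * x ^ J * q ^ J) by ring.
 apply (sum_ge_term (fun j => c j * x ^ j * q ^ j)); auto. intros.
 pose proof (hc i H2). pose proof (pow_le x i H1). pose proof (pow_le q i H0).
 apply Rmult_le_pos; auto. apply Rmult_le_pos; auto. Qed.

Lemma Tq_lb q x : 0 <= q -> 0 <= x -> q * x <= 1 -> (q * x) ^ d <= Tq q x.
Proof. intros. unfold Tq. rewrite <- (Rmult_1_r ((q*x)^d)), <- hs, scal_sum. apply sum_Rle.
 intros j Hj. pose proof (hc j Hj) as Hc. pose proof (pow_decr (q*x) j d ltac:(split; nra) Hj) as Hp.
 rewrite !Rpow_mult_distr in Hp. rewrite !Rpow_mult_distr.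
 assert (0 <= c j * (q^j*x^j - q^d*x^d)) by (apply Rmult_le_pos; lra). nra. Qed.

Lemma Tq_le1 q x : 0 <= q <= 1 -> 0 <= x -> Tq q x <= Tq 1 x.
Proof. intros. apply sum_Rle. intros j Hj. pose proof (hc j Hj). rewrite pow1.
 pose proof (pow_le x j H0). pose proof (pow_incr q 1 j ltac:(lra)). rewrite pow1 in H3.
 pose proof (pow_le q j ltac:(lra)).
 apply Rmult_le_compat_l; [apply Rmult_le_pos|]; lra. Qed.

Lemma Tq_11 : Tq 1 1 = 1.
Proof. transitivity (sum_f_R0 c d); auto. unfold Tq. apply sum_eq. intros. rewrite pow1. ring. Qed.

Lemma Tq_swap q : Tq q 1 = Tq 1 q.
Proof. unfold Tq. apply sum_eq. intros. rewrite !pow1. ring. Qed.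

End S.
Section Main.
Variable d : nat.
Variable c : nat -> R.
Hypothesis hc : forall i, (i <= d)%nat -> 0 <= c i.
Hypothesis hs : sum_f_R0 c d = 1.
Hypothesis hb : 1 < branching d c.
Variable j' : nat.
Hypothesis hJd : (S (S j') <= d)%nat.
Hypothesis hcJ : 0 < c (S (S j')).

Definition bb := branching d c.
Definition beta := (1 + bb) / (2 * bb).
Definition MM := S (S d * d).
Definition eps := (1 - beta) / INR MM.
Definition zz := 1 - eps / 2.
Definition rho := (1 + bb) / 2.
Definition kappa := (1 - zz) * (bb - 1) / 2.
Definition eta := (1/2) * c (S (S j')) * (kappa / 2) ^ (S (S j')).
Definition delta := (1/2) * c (S (S j')) * eta ^ j' * (1/2) * kappa.
Definition theta := 1 - delta.
Definition gam := / (1 - theta) + 1.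

Lemma MM_pos : 0 < INR MM.
Proof. unfold MM. apply lt_0_INR. lia. Qed.

Lemma beta_bounds : 1/2 < beta < 1.
Proof. unfold beta. fold bb in hb. split; apply Rmult_lt_reg_r with (2*bb); try lra;
 field_simplify; lra. Qed.

Lemma eps_bounds : 0 < eps <= 1/2.
Proof. unfold eps. pose proof MM_pos. pose proof beta_bounds. assert (1 <= INR MM).
 { unfold MM. rewrite S_INR. pose proof (pos_INR (S d * d)). lra. }
 split. apply Rdiv_lt_0_compat; lra. apply Rmult_le_reg_r with (INR MM); auto.
 field_simplify; lra. Qed.

Lemma numw w k : 1 - eps <= w <= 1 -> (k <= MM)%nat -> w ^ k >= beta.
Proof. intros. pose proof eps_bounds. replace w with (1 - (1 - w)) by ring.
 pose proof (bern (1 - w) k ltac:(lra)). pose proof (le_INR _ _ H0). pose proof (pos_INR k).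
 assert (INR MM * eps = 1 - beta) by (unfold eps; field; pose proof MM_pos; lra).
 assert (INR k * (1 - w) <= INR MM * eps) by (apply Rmult_le_compat; lra). lra. Qed.

Lemma kappa_pos : 0 < kappa.
Proof. unfold kappa, zz. pose proof eps_bounds. fold bb in hb. nra. Qed.

Lemma rho_gt1 : 1 < rho.
Proof. unfold rho. fold bb in hb. lra. Qed.

Lemma delta_pos : 0 < delta.
Proof. unfold delta, eta. pose proof kappa_pos.
 assert (0 < (kappa/2)^(S (S j'))) by (apply pow_lt; lra).
 assert (0 < 1/2 * c (S (S j')) * (kappa / 2) ^ S (S j')) by (apply Rmult_lt_0_compat; [lra|auto]).
 assert (0 < (1 / 2 * c (S (S j')) * (kappa / 2) ^ S (S j')) ^ j') by (apply pow_lt; auto).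
 assert (0 < 1 / 2 * c (S (S j')) * (1 / 2 * c (S (S j')) * (kappa / 2) ^ S (S j')) ^ j') by (apply Rmult_lt_0_compat; [lra|auto]).
 nra. Qed.

Lemma z_gap : zz - Tq d c 1 zz >= kappa.
Proof. pose proof eps_bounds. assert (hz : 1 - eps <= zz <= 1) by (unfold zz; lra).
 pose proof (T_diff d c 1 1 zz). rewrite (Tq_11 d c hs) in H0. rewrite !Rmult_1_l in H0.
 pose proof (Fq_mono d c hc 1 zz zz zz ltac:(lra) ltac:(lra)).
 pose proof (Fq_diag d c hc zz ltac:(lra)).
 pose proof (numw zz d hz ltac:(unfold MM; nia)).
 fold bb in H2. pose proof (pow_le zz d ltac:(lra)). fold bb in hb.
 assert (Fq d c zz zz >= beta * bb) by nra.
 assert (beta * bb = rho) by (unfold beta, rho; field; lra).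
 unfold kappa. unfold rho in H6. assert (Fq d c 1 zz >= (1 + bb)/2) by lra.
 assert (0 <= 1 - zz) by lra. nra. Qed.

Variable n : nat.
Definition q := 1 - / INR n.
Hypothesis hq : 1/2 <= q.
Hypothesis hq1 : q < 1.
Hypothesis hqe : 1 - eps / 2 <= q.

Definition A i := q * Fq d c (q * phi d c n (i - 1)) (q * phi d c n i).

Lemma phi_S k : phi d c n (S k) = Tq d c q (phi d c n k).
Proof. reflexivity. Qed.

Lemma lam_S k : lam d c n (S k) = phi d c n k - phi d c n (S k).
Proof. unfold lam. simpl. rewrite Nat.sub_0_r. reflexivity. Qed.

Lemma A_S k : A (S k) = q * Fq d c (q * phi d c n k) (q * phi d c n (S k)).
Proof. unfold A. simpl. rewrite Nat.sub_0_r. reflexivity. Qed.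

Lemma phi_pos k : 0 < phi d c n k.
Proof. induction k. simpl; lra. rewrite phi_S.
 pose proof (Tq_term d c hc _ q (phi d c n k) hJd ltac:(lra) ltac:(lra)).
 assert (0 < (q * phi d c n k) ^ S (S j')) by (apply pow_lt; nra). nra. Qed.

Lemma lam1_pos : 0 < lam d c n 1.
Proof. rewrite lam_S. simpl phi. change (tfun d c n 1) with (Tq d c q 1).
 rewrite (Tq_swap d c q). pose proof (T_diff d c 1 1 q). rewrite (Tq_11 d c hs) in H. rewrite !Rmult_1_l in H.
 pose proof (Fq_term d c hc _ 1 q hJd ltac:(lra) ltac:(lra)).
 pose proof (Dp_ge_pow (S j') 1 q ltac:(lra) ltac:(lra)). rewrite pow1 in H1.
 assert (c (S (S j')) <= Fq d c 1 q) by nra. assert (0 < (1 - q) * Fq d c 1 q) by (apply Rmult_lt_0_compat; lra). lra. Qed.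

Lemma lam_rec k : lam d c n (S (S k)) = A (S k) * lam d c n (S k).
Proof. rewrite !lam_S, A_S. pose proof (T_diff d c q (phi d c n k) (phi d c n (S k))).
 rewrite <- !phi_S in H. rewrite H. ring. Qed.

Lemma A_pos k : 0 < A (S k).
Proof. rewrite A_S. pose proof (phi_pos k). pose proof (phi_pos (S k)).
 pose proof (Fq_term d c hc _ (q * phi d c n k) (q * phi d c n (S k)) hJd ltac:(nra) ltac:(nra)).
 pose proof (Dp_ge_pow (S j') (q * phi d c n k) (q * phi d c n (S k)) ltac:(nra) ltac:(nra)).
 assert (0 < (q * phi d c n k) ^ S j') by (apply pow_lt; nra).
 assert (0 < c (S (S j')) * Dp (S (S j')) (q * phi d c n k) (q * phi d c n (S k))) by (apply Rmult_lt_0_compat; lra).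
 apply Rmult_lt_0_compat; lra. Qed.

Lemma lam_pos k : 0 < lam d c n (S k).
Proof. induction k. apply lam1_pos. rewrite lam_rec. pose proof (A_pos k). nra. Qed.

Lemma phi_dec k : phi d c n (S k) <= phi d c n k.
Proof. pose proof (lam_pos k). rewrite lam_S in H. lra. Qed.

Lemma phi_le1 k : phi d c n k <= 1.
Proof. induction k. simpl; lra. pose proof (phi_dec k). lra. Qed.

Lemma phi_anti i j : (i <= j)%nat -> phi d c n j <= phi d c n i.
Proof. induction 1. lra. pose proof (phi_dec m). lra. Qed.

Lemma A_dec k : A (S (S k)) <= A (S k).
Proof. rewrite !A_S. pose proof (phi_pos k). pose proof (phi_pos (S k)). pose proof (phi_pos (S (S k))).
 pose proof (phi_dec k). pose proof (phi_dec (S k)).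
 apply Rmult_le_compat_l. lra. apply Fq_mono; auto; split; nra. Qed.

Lemma A_anti i j : (1 <= i)%nat -> (i <= j)%nat -> A j <= A i.
Proof. intros Hi. induction 1. lra. destruct m. lia. pose proof (A_dec m). lra. Qed.

Lemma A_nonneg i : (1 <= i)%nat -> 0 <= A i.
Proof. intros. destruct i. lia. pose proof (A_pos i). lra. Qed.

Lemma not_all_ge : ~ (forall i, (1 <= i)%nat -> 1 <= A i).
Proof. intro H. assert (Hl : forall k, lam d c n 1 <= lam d c n (S k)).
 { induction k. lra. rewrite lam_rec. pose proof (H (S k) ltac:(lia)). pose proof (lam_pos k). nra. }
 assert (Hp : forall k, phi d c n k <= 1 - INR k * lam d c n 1).
 { induction k. simpl; lra. pose proof (lam_S k). pose proof (Hl k). rewrite S_INR. lra. }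
 pose proof lam1_pos. destruct (INR_unbounded (/ lam d c n 1)) as [k Hk].
 pose proof (Hp k). pose proof (phi_pos k).
 assert (INR k * lam d c n 1 > 1).
 { apply Rmult_gt_compat_r with (r := lam d c n 1) in Hk; auto. rewrite Rinv_l in Hk; lra. }
 lra. Qed.

Definition YY := (q * zz) ^ (S d).

Lemma qz_bounds : 1 - eps <= q * zz <= 1.
Proof. pose proof eps_bounds. unfold zz. split; nra. Qed.

Lemma YY_bounds : 0 <= YY <= q * zz.
Proof. pose proof qz_bounds. pose proof eps_bounds. unfold YY. split. apply pow_le; lra.
 pose proof (pow_decr (q*zz) 1 (S d) ltac:(lra) ltac:(lia)). rewrite pow_1 in H1. lra. Qed.

Lemma G X1 X2 : YY <= X1 -> YY <= X2 -> q * Fq d c X1 X2 >= rho.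
Proof. intros. pose proof YY_bounds. pose proof qz_bounds. pose proof eps_bounds.
 pose proof (Fq_mono d c hc X1 X2 YY YY ltac:(lra) ltac:(lra)).
 pose proof (Fq_diag d c hc YY ltac:(lra)).
 assert (q * YY ^ d >= beta).
 { unfold YY. rewrite <- pow_mult.
   assert (q * (q * zz) ^ (S d * d) >= (q*zz) * (q * zz) ^ (S d * d)).
   { pose proof (pow_le (q*zz) (S d * d) ltac:(lra)). assert (q*zz <= q) by (unfold zz; nra).
     apply Rle_ge, Rmult_le_compat_r; lra. }
   pose proof (numw (q*zz) MM H2 ltac:(lia)). change ((q*zz)^MM) with (q*zz * (q*zz)^(S d * d)) in H7. lra. }
 fold bb in H5, hb. assert (beta * bb = rho) by (unfold beta, rho; field; lra).
 assert (0 <= YY ^ d) by (apply pow_le; lra).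
 assert (q * Fq d c X1 X2 >= q * (YY ^ d * bb)) by (apply Rle_ge, Rmult_le_compat_l; lra).
 nra. Qed.


Lemma qT_YY : YY <= q * Tq d c q zz.
Proof. pose proof qz_bounds. pose proof eps_bounds. assert (0 <= zz <= 1) by (unfold zz; lra).
 pose proof (Tq_lb d c hc hs q zz ltac:(lra) ltac:(lra) ltac:(lra)).
 pose proof (pow_le (q*zz) d ltac:(lra)). unfold YY. change ((q*zz)^(S d)) with (q*zz*(q*zz)^d).
 assert (q*zz*(q*zz)^d <= q * (q*zz)^d) by (apply Rmult_le_compat_r; nra). nra. Qed.

Lemma core : exists l1 ls : nat,
        (1 <= l1)%nat /\ (l1 <= ls)%nat /\
        (forall i : nat, (2 <= i)%nat -> (i <= ls)%nat ->
            lam d c n (i - 1) <= lam d c n i) /\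
        (forall j : nat, (ls <= j)%nat -> lam d c n j > lam d c n (j + 1)) /\
        (forall i : nat, (1 <= i)%nat -> (i < l1)%nat ->
            lam d c n (i + 1) >= rho * lam d c n i) /\
        kappa <= lam d c n l1 /\
        INR (ls - l1) * kappa <= 1 /\
        (forall i : nat, (ls + 2 <= i)%nat ->
            exists s : R, is_series (fun k : nat => lam d c n (i + k)) s /\
                          s <= gam * lam d c n i).
Proof.
 pose proof eps_bounds as Heps. pose proof rho_gt1 as Hrho. pose proof kappa_pos as Hk.
 assert (Hz : 0 <= zz <= 1 - eps/2) by (unfold zz; lra).
 pose proof YY_bounds as HY. pose proof qz_bounds as Hqz. pose proof qT_YY as HqT.
 assert (Hm : exists m, phi d c n m <= zz).
 { destruct (classic (exists m, phi d c n m <= zz)) as [H|H]; auto. exfalso. apply not_all_ge.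
   intros i Hi. destruct i. lia. rewrite A_S.
   assert (forall k, zz < phi d c n k) by (intro k; apply Rnot_le_lt; intro; apply H; eauto).
   pose proof (H0 i). pose proof (H0 (S i)).
   assert (q * zz <= q * phi d c n i) by (apply Rmult_le_compat_l; lra).
   assert (q * zz <= q * phi d c n (S i)) by (apply Rmult_le_compat_l; lra).
   pose proof (G (q * phi d c n i) (q * phi d c n (S i)) ltac:(lra) ltac:(lra)). lra. }
 destruct (least_ex _ Hm) as [m [Hm1 Hm2]].
 destruct m as [|m']. { simpl in Hm1. lra. }
 assert (Hpm' : zz < phi d c n m') by (apply Rnot_le_lt; apply Hm2; lia).
 assert (HAm : A (S m') >= rho).
 { rewrite A_S. apply G.
   - assert (q * zz <= q * phi d c n m') by (apply Rmult_le_compat_l; lra). lra.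
   - rewrite phi_S. pose proof (Tq_mono d c hc q (phi d c n m') zz ltac:(lra) ltac:(lra)).
     assert (q * Tq d c q zz <= q * Tq d c q (phi d c n m')) by (apply Rmult_le_compat_l; lra). lra. }
 assert (HA2 : forall i, (1 <= i)%nat -> (i <= S m')%nat -> A i >= rho).
 { intros. pose proof (A_anti i (S m') H H0). lra. }
 assert (Hls : exists i, (1 <= i)%nat /\ A i < 1).
 { destruct (classic (exists i, (1 <= i)%nat /\ A i < 1)) as [H|H]; auto. exfalso. apply not_all_ge.
   intros i Hi. apply Rnot_lt_le. intro. apply H. eauto. }
 destruct (least_ex _ Hls) as [ls [[Hls1 Hls2] Hls3]].
 assert (HA1 : forall i, (1 <= i)%nat -> (i < ls)%nat -> 1 <= A i).
 { intros. apply Rnot_lt_le. intro. apply (Hls3 i H0). auto. }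
 assert (Hl1ls : (S (S m') <= ls)%nat).
 { destruct (Nat.le_gt_cases (S (S m')) ls); auto. pose proof (HA2 ls Hls1 ltac:(lia)). lra. }
 assert (Hlk : kappa <= lam d c n (S (S m'))).
 { rewrite lam_S. rewrite (phi_S (S m')). set (x := phi d c n (S m')).
   assert (Hx1 : x <= zz) by exact Hm1.
   assert (Hx2 : Tq d c q zz <= x) by (unfold x; rewrite phi_S; apply Tq_mono; auto; lra).
   pose proof (T_diff d c q x zz).
   assert (HG : q * Fq d c (q * x) (q * zz) >= rho).
   { apply G. assert (q * Tq d c q zz <= q * x) by (apply Rmult_le_compat_l; lra). lra. lra. }
   pose proof (Tq_le1 d c hc q zz ltac:(lra) ltac:(lra)). pose proof z_gap.
   assert (0 <= (zz - x) * (q * Fq d c (q * x) (q * zz) - 1)) by (apply Rmult_le_pos; lra).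
   nra. }
 assert (Hlk2 : forall k, (S m' + S k <= ls)%nat -> kappa <= lam d c n (S m' + S k)).
 { induction k; intros.
   - replace (S m' + 1)%nat with (S (S m')) by lia. auto.
   - replace (S m' + S (S k))%nat with (S (S (S (m' + k)))) by lia.
     rewrite lam_rec. replace (S m' + S k)%nat with (S (S (m' + k))) in IHk by lia.
     pose proof (IHk ltac:(lia)). pose proof (HA1 (S (S (m' + k))) ltac:(lia) ltac:(lia)).
     pose proof (lam_pos (S (m' + k))). nra. }
 assert (Hsum : forall k, (S m' + S k <= ls)%nat ->
           INR (S k) * kappa <= phi d c n (S m') - phi d c n (S m' + S k)).
 { induction k; intros.
   - replace (S m' + 1)%nat with (S (S m')) by lia. rewrite <- lam_S. simpl. lra.
   - replace (S m' + S (S k))%nat with (S (S m' + S k)) by lia.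
     pose proof (lam_S (S m' + S k)). pose proof (Hlk2 (S k) H).
     replace (S m' + S (S k))%nat with (S (S m' + S k)) in H1 by lia.
     pose proof (IHk ltac:(lia)). rewrite S_INR. lra. }
 assert (Hlsk : kappa <= lam d c n ls).
 { pose proof (Hlk2 (ls - S (S m'))%nat ltac:(lia)).
   replace (S m' + S (ls - S (S m')))%nat with ls in H by lia. auto. }
 exists (S (S m')), ls. split; [lia|]. split; [lia|].
 split.
 { intros i Hi1 Hi2. destruct i as [|[|k]]; try lia. replace (S (S k) - 1)%nat with (S k) by lia.
   rewrite lam_rec. pose proof (HA1 (S k) ltac:(lia) ltac:(lia)). pose proof (lam_pos k). nra. }
 split.
 { intros j Hj. destruct j as [|k]. lia. replace (S k + 1)%nat with (S (S k)) by lia.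
   rewrite lam_rec. pose proof (A_anti ls (S k) Hls1 Hj). pose proof (lam_pos k). nra. }
 split.
 { intros i Hi1 Hi2. destruct i as [|k]. lia. replace (S k + 1)%nat with (S (S k)) by lia.
   rewrite lam_rec. pose proof (HA2 (S k) ltac:(lia) ltac:(lia)). pose proof (lam_pos k). nra. }
 split. auto.
 split.
 { pose proof (Hsum (ls - S (S m'))%nat ltac:(lia)).
   replace (S m' + S (ls - S (S m')))%nat with ls in H by lia.
   pose proof (phi_le1 (S m')). pose proof (phi_pos ls). rewrite S_INR in H.
   replace (INR (ls - S (S m'))) with (INR (ls - S (S m'))) by reflexivity. lra. }
 destruct ls as [|k0]. lia.
 assert (Hdel : A (S (S k0)) <= A (S k0) - delta).
 { rewrite !A_S. set (X1 := q * phi d c n k0). set (X2 := q * phi d c n (S k0)). set (X3 := q * phi d c n (S (S k0))).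
   pose proof (phi_pos k0). pose proof (phi_pos (S k0)). pose proof (phi_pos (S (S k0))).
   pose proof (phi_dec k0). pose proof (phi_dec (S k0)).
   assert (H3' : 0 <= X3 <= X2) by (unfold X2, X3; split; nra). assert (X2 <= X1) by (unfold X1, X2; nra).
   pose proof (Fq_gap d c hc j' X1 X2 X3 hJd H3' H4).
   assert (HX13 : q * kappa <= X1 - X3).
   { unfold X1, X3. pose proof (lam_S k0). pose proof (lam_S (S k0)). pose proof (lam_pos (S k0)).
     assert (kappa <= phi d c n k0 - phi d c n (S (S k0))) by lra. nra. }
   assert (Hpk : kappa <= phi d c n k0) by (pose proof (lam_S k0); lra).
   assert (HX2 : eta <= X2).
   { unfold X2. rewrite phi_S. pose proof (Tq_term d c hc _ q (phi d c n k0) hJd ltac:(lra) ltac:(lra)).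
     assert (kappa / 2 <= q * phi d c n k0) by nra.
     pose proof (pow_incr (kappa/2) (q * phi d c n k0) (S (S j')) ltac:(lra)).
     unfold eta. assert (1/2 * c (S (S j')) * (kappa/2)^(S (S j')) <= q * (c (S (S j')) * (q * phi d c n k0) ^ S (S j'))).
     { replace (1/2 * c (S (S j')) * (kappa/2)^(S (S j'))) with (1/2 * (c (S (S j')) * (kappa/2)^(S (S j')))) by ring.
       pose proof (pow_le (kappa/2) (S (S j')) ltac:(lra)).
       apply Rmult_le_compat; try lra. apply Rmult_le_pos; lra. apply Rmult_le_compat_l; lra. }
     assert (q * (c (S (S j')) * (q * phi d c n k0) ^ S (S j')) <= q * Tq d c q (phi d c n k0)) by (apply Rmult_le_compat_l; lra).
     lra. }
   assert (Heta : 0 <= eta).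
   { unfold eta. apply Rmult_le_pos. apply Rmult_le_pos; lra. apply pow_le; lra. }
   pose proof (pow_incr eta X2 j' ltac:(lra)).
   assert (HP : delta <= q * (c (S (S j')) * X2 ^ j' * (X1 - X3))).
   { unfold delta. pose proof (pow_le eta j' Heta).
     replace (1 / 2 * c (S (S j')) * eta ^ j' * (1 / 2) * kappa) with ((1/2) * (c (S (S j')) * eta ^ j' * ((1/2) * kappa))) by ring.
     assert (0 <= c (S (S j')) * eta ^ j') by (apply Rmult_le_pos; lra).
     assert (c (S (S j')) * eta ^ j' <= c (S (S j')) * X2 ^ j') by (apply Rmult_le_compat_l; lra).
     assert (1/2 * kappa <= X1 - X3) by nra.
     assert (c (S (S j')) * eta ^ j' * (1/2 * kappa) <= c (S (S j')) * X2 ^ j' * (X1 - X3)) by (apply Rmult_le_compat; lra).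
     apply Rmult_le_compat; try lra. apply Rmult_le_pos; lra. }
   assert (q * (Fq d c X1 X2 - Fq d c X2 X3) >= q * (c (S (S j')) * X2 ^ j' * (X1 - X3))) by (apply Rle_ge, Rmult_le_compat_l; lra).
   lra. }
 pose proof delta_pos.
 assert (Hth : forall p, (S (S k0) <= p)%nat -> 0 <= A p <= theta).
 { intros. pose proof (A_anti (S (S k0)) p ltac:(lia) H0). pose proof (A_nonneg p ltac:(lia)). unfold theta. lra. }
 pose proof (Hth (S (S k0)) (le_n _)) as Hth0.
 intros i Hi.
 assert (Hgeo : forall k, 0 <= lam d c n (i + k) <= lam d c n i * theta ^ k).
 { induction k.
   - replace (i + 0)%nat with i by lia. simpl. destruct i. lia. pose proof (lam_pos i). lra.
   - destruct (i + k)%nat as [|p] eqn:E. lia. replace (i + S k)%nat with (S (S p)) by lia.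
     rewrite lam_rec. pose proof (Hth (S p) ltac:(lia)). pose proof (lam_pos p). simpl pow.
     split. nra. assert (A (S p) * lam d c n (S p) <= theta * lam d c n (S p)) by (apply Rmult_le_compat_r; lra).
     assert (theta * lam d c n (S p) <= theta * (lam d c n i * theta ^ k)) by (apply Rmult_le_compat_l; lra). lra. }
 assert (Hab : Rabs theta < 1) by (rewrite Rabs_pos_eq; unfold theta in *; lra).
 pose proof (is_series_geom theta Hab) as Hg.
 pose proof (is_series_scal_l (lam d c n i) _ _ Hg) as Hg2.
 assert (Hex : ex_series (fun k => lam d c n (i + k))).
 { apply (@ex_series_le R_AbsRing R_CompleteNormedModule) with (b := fun k => lam d c n i * theta ^ k).
   - intro k. change (norm (lam d c n (i + k))) with (Rabs (lam d c n (i + k))).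
     rewrite Rabs_pos_eq; apply Hgeo.
   - eexists. exact Hg2. }
 exists (Series (fun k => lam d c n (i + k))). split. apply Series_correct; auto.
 assert (Series (fun k => lam d c n (i + k)) <= Series (fun k => lam d c n i * theta ^ k)).
 { apply Series_le. apply Hgeo. eexists; exact Hg2. }
 assert (Hs : Series (fun k => lam d c n i * theta ^ k) = lam d c n i * / (1 - theta)) by (apply is_series_unique; exact Hg2).
 rewrite Hs in H0.
 unfold gam. destruct i. lia. pose proof (lam_pos i). unfold theta in *. nra.
Qed.

End Main.


Lemma inv_small (x e : R) : 0 < e -> x > 2 / e -> 0 < / x /\ / x <= e / 2.
Proof. intros. assert (0 < 2 / e) by (apply Rdiv_lt_0_compat; lra). assert (0 < x) by lra.
 split. apply Rinv_0_lt_compat; lra.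
 assert (x * e > 2). { apply Rmult_gt_compat_r with (r := e) in H0; auto. replace (2 / e * e) with 2 in H0 by (field; lra). lra. }
 apply Rmult_le_reg_l with x; auto. rewrite Rinv_r by lra. lra. Qed.

Theorem lemma3p1 (d : nat) (c : nat -> R) :
  is_offspring_dist d c ->
  1 < branching d c ->
  exists (rho gamma kappa : R) (C N : nat),
    1 < rho /\ 1 < gamma /\ 0 < kappa /\
    forall n : nat, (N <= n)%nat ->
      exists l1 ls : nat,
        (1 <= l1)%nat /\ (l1 <= ls)%nat /\
        (* (1) single-peaked at ls *)
        (forall i : nat, (2 <= i)%nat -> (i <= ls)%nat ->
            lam d c n (i - 1) <= lam d c n i) /\
        (forall j : nat, (ls <= j)%nat -> lam d c n j > lam d c n (j + 1)) /\
        (* (2) geometric growth before l1 *)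
        (forall i : nat, (1 <= i)%nat -> (i < l1)%nat ->
            lam d c n (i + 1) >= rho * lam d c n i) /\
        (* (3) lambda_{l1} = Omega(1) and ls - l1 = O(1) *)
        kappa <= lam d c n l1 /\
        (ls - l1 <= C)%nat /\
        (* (4) geometric tail after ls + 2 *)
        (forall i : nat, (ls + 2 <= i)%nat ->
            exists s : R, is_series (fun k : nat => lam d c n (i + k)) s /\
                          s <= gamma * lam d c n i).
Proof.
 intros [hc hs] hb.
 destruct (classic (exists j', (S (S j') <= d)%nat /\ 0 < c (S (S j')))) as [[j' [hJd hcJ]] | HnJ].
 2: { exfalso. assert (branching d c <= sum_f_R0 c d).
      { unfold branching. apply sum_Rle. intros i Hi. pose proof (hc i Hi).
        destruct i as [|[|k]].
        - simpl. lra.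
        - simpl. lra.
        - assert (c (S (S k)) <= 0). { apply Rnot_lt_le. intro. apply HnJ. eauto. }
          assert (c (S (S k)) = 0) by lra. rewrite H1. lra. }
      lra. }
 assert (Hk : 0 < kappa d c) by (eapply kappa_pos; eauto).
 assert (Hr : 1 < rho d c) by (eapply rho_gt1; eauto).
 assert (Hd : 0 < delta d c j') by (eapply delta_pos; eauto).
 assert (He : 0 < eps d c <= 1/2) by (eapply eps_bounds; eauto).
 destruct (INR_unbounded (/ kappa d c)) as [C HC].
 destruct (INR_unbounded (2 / eps d c)) as [N HN].
 exists (rho d c), (gam d c j'), (kappa d c), C, N.
 split; auto. split. { unfold gam, theta. replace (1 - (1 - delta d c j')) with (delta d c j') by ring.
   pose proof (Rinv_0_lt_compat _ Hd). lra. }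
 split; auto.
 intros n Hn. pose proof (le_INR _ _ Hn) as HNn.
 destruct (inv_small (INR n) (eps d c) ltac:(lra) ltac:(lra)) as [Hi1 Hi2].
 destruct (core d c hc hs hb j' hJd hcJ n) as [l1 [ls H]].
 { unfold q. lra. } { unfold q. lra. } { unfold q. lra. }
 exists l1, ls. destruct H as [H1 [H2 [H3 [H4 [H5 [H6 [H7 H8]]]]]]].
 repeat split; auto.
 assert (INR (ls - l1) < INR C).
 { apply Rle_lt_trans with (/ kappa d c); auto. apply Rmult_le_reg_r with (kappa d c); auto.
   rewrite Rinv_l by lra. lra. }
 apply INR_lt in H. lia.
Qed.
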